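(* Let $f:\mathbb{R}^p\to\mathbb{R}$ be convex and differentiable with Lipschitz gradient, and for each $j\in[p]=\{1,\dots,p\}$ let $g_j:\mathbb{R}\to\mathbb{R}\cup\{+\infty\}$ be proper, closed and convex. Set $g(x)=\sum_{j=1}^p g_j(x_j)$ and $\Phi=f+g$. Assume $\arg\min_{x\in\mathbb{R}^p}\Phi(x)\neq\emptyset$, and that every minimizer $x^\star$ of $\Phi$ satisfies the non-degeneracy condition $-\nabla f(x^\star)\in\operatorname{ri}(\partial g(x^\star))$. Fix a minimizer $x^\star$ and let $\mathcal{S}=\mathcal{S}_{x^\star}$ be its generalized support. Assume that for all $j\in\mathcal{S}$, $g_j$ is $\mathcal{C}^2$ on a neighbourhood of $x^\star_j$, and that $f$ is $\mathcal{C}^2$ on a neighbourhood of $x^\star$. Let $(x^{(k)})_{k\ge 0}$ be the sequence generated by cyclic proximal coordinate descent with step sizes $0<\gamma_j\le 1/L_j$, and assume $x^{(k)}\to x^\star$. Then there exists $K>0$ such that for all $k\ge K$, $x^{(k)}_{\mathcal{S}^c}=x^\star_{\mathcal{S}^c}$.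
   Context: $\operatorname{ri}$ denotes relative interior and $\partial$ the convex subdifferential. $L_j$ is the coordinatewise Lipschitz constant of $\nabla_j f$: $|\nabla_j f(x+he_j)-\nabla_j f(x)|\le L_j|h|$ for all $x\in\mathbb{R}^p,h\in\mathbb{R}$. The generalized support of $x$ is $\mathcal{S}_x=\{j\in[p]:\partial g_j(x_j)\text{ is a singleton}\}$, and $\mathcal{S}^c=[p]\setminus\mathcal{S}$. For a convex $h$ and $\gamma>0$, $\operatorname{prox}_{\gamma h}(v)=\arg\min_y \frac{1}{2\gamma}\|v-y\|^2+h(y)$. Cyclic proximal coordinate descent: given $x^{(0)}\in\mathbb{R}^p$, for each $k\ge0$ set $x^{(0,k)}=x^{(k)}$; for $j=1,\dots,p$, set $x^{(j,k)}=x^{(j-1,k)}$ and then replace its $j$-th coordinate by $\operatorname{prox}_{\gamma_j g_j}\big(x^{(j-1,k)}_j-\gamma_j\nabla_j f(x^{(j-1,k)})\big)$; finally $x^{(k+1)}=x^{(p,k)}$. *)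

(* Defs.v *)
From HB Require Import structures.
From mathcomp Require Import all_boot all_order all_algebra.
From mathcomp Require Import all_classical all_reals all_analysis.
Set Implicit Arguments. Unset Strict Implicit. Unset Printing Implicit Defensive.
Import Order.TTheory GRing.Theory Num.Theory.
Import numFieldNormedType.Exports.
Local Open Scope classical_set_scope.
Local Open Scope ring_scope.

Section Defs.
Variables (R : realType) (p : nat).
Local Notation vec := 'rV[R]_p.

Definition ej (j : 'I_p) : vec := delta_mx 0 j.

Definition dotp (u v : vec) : R := \sum_(i < p) u 0 i * v 0 i.

Definition partial (f : vec -> R) (j : 'I_p) (x : vec) : R := 'D_(ej j) f x.

Definition grad (f : vec -> R) (x : vec) : vec := \row_j partial f j x.

Definition convex_fun (f : vec -> R) :=
  forall (x y : vec) (t : R), 0 <= t <= 1 ->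
    f (t *: x + (1 - t) *: y) <= t * f x + (1 - t) * f y.

Definition differentiable_everywhere (f : vec -> R) :=
  forall x : vec, differentiable f x.

Definition lipschitz_gradient (f : vec -> R) :=
  exists L : R, forall x y : vec, `|grad f x - grad f y| <= L * `|x - y|.

Definition coord_lipschitz (f : vec -> R) (j : 'I_p) (Lj : R) :=
  forall (x : vec) (h : R),
    `|partial f j (x + h *: ej j) - partial f j x| <= Lj * `|h|.

Definition C2_near (f : vec -> R) (x : vec) :=
  exists2 eps : R, 0 < eps &
    forall y : vec, ball x eps y ->
      (forall i : 'I_p, derivable f y (ej i) /\ {for y, continuous (partial f i)}) /\
      (forall i j : 'I_p, derivable (partial f i) y (ej j) /\
                          {for y, continuous (partial (partial f i) j)}).

Definition subdiff (h : vec -> \bar R) (x : vec) : set vec :=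
  [set v | h x \is a fin_num /\
           forall y : vec, (h x + (dotp v (y - x))%:E <= h y)%E].

Definition aff_hull (C : set vec) : set vec :=
  [set z | exists (n : nat) (c : 'I_n -> vec) (l : 'I_n -> R),
      (forall i, C (c i)) /\ \sum_(i < n) l i = 1 /\ z = \sum_(i < n) l i *: c i].

Definition rel_interior (C : set vec) : set vec :=
  [set x | C x /\ exists2 eps : R, 0 < eps &
             forall y, ball x eps y -> aff_hull C y -> C y].

End Defs.

Section Defs1.
Variable (R : realType).

Definition convex_ext (h : R -> \bar R) :=
  forall (x y t : R), (0 < t < 1)%R ->
    (h ((t * x + (1 - t) * y)%R) <= t%:E * h x + (1 - t)%:E * h y)%E.

Definition proper_ext (h : R -> \bar R) :=
  (forall x, h x != -oo%E) /\ exists x, h x \is a fin_num.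

Definition closed_ext (h : R -> \bar R) := lower_semicontinuous h.

Definition subdiff1 (h : R -> \bar R) (x : R) : set R :=
  [set v | h x \is a fin_num /\ forall y : R, (h x + (v * (y - x))%:E <= h y)%E].

Definition C2_near1 (h : R -> \bar R) (x : R) :=
  exists2 eps : R, 0 < eps & exists u : R -> R,
    forall y : R, `|y - x| < eps ->
      h y = (u y)%:E /\ derivable u y 1 /\ derivable (derive1 u) y 1 /\
      {for y, continuous (derive1n 2 u)}.

Definition is_prox (gam : R) (h : R -> \bar R) (v y : R) :=
  forall z : R, (((v - y) ^+ 2 / (2 * gam))%:E + h y <=
                 ((v - z) ^+ 2 / (2 * gam))%:E + h z)%E.

End Defs1.

Definition sep_sum (R : realType) (p : nat) (g : 'I_p -> R -> \bar R)
  (x : 'rV[R]_p) : \bar R := (\sum_(j < p) g j (x 0%R j))%E.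

Definition Phi (R : realType) (p : nat) (f : 'rV[R]_p -> R)
  (g : 'I_p -> R -> \bar R) (x : 'rV[R]_p) : \bar R :=
  ((f x)%:E + sep_sum g x)%E.

Definition is_minimizer (R : realType) (p : nat) (F : 'rV[R]_p -> \bar R)
  (x : 'rV[R]_p) := forall y, (F x <= F y)%E.

Definition gen_support (R : realType) (p : nat) (g : 'I_p -> R -> \bar R)
  (x : 'rV[R]_p) (j : 'I_p) : Prop :=
  exists v : R, subdiff1 (g j) (x 0 j) = [set v].

(* cyclic proximal coordinate descent: z k j = x^{(j,k)} for j = 0..p *)
Definition cyclic_prox_cd (R : realType) (p : nat) (f : 'rV[R]_p -> R)
  (g : 'I_p -> R -> \bar R) (gam : 'I_p -> R)
  (x : nat -> 'rV[R]_p) (z : nat -> nat -> 'rV[R]_p) :=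
  forall k : nat,
    z k 0%N = x k /\
    (forall j : 'I_p,
       (forall i : 'I_p, i != j -> z k j.+1 0 i = z k j 0 i) /\
       is_prox (gam j) (g j)
         (z k j 0 j - gam j * partial f j (z k j)) (z k j.+1 0 j)) /\
    x k.+1 = z k p.

(* Main.v *)
Require Import Defs.
From HB Require Import structures.
From mathcomp Require Import all_boot all_order all_algebra.
From mathcomp Require Import all_classical all_reals all_analysis.
From mathcomp Require Import ring lra zify.
Import Order.TTheory GRing.Theory Num.Theory.
Import numFieldNormedType.Exports.
Local Open Scope classical_set_scope.
Local Open Scope ring_scope.

Section Aux.
Variables (R : realType) (p : nat).
Local Notation vec := 'rV[R]_p.

Lemma entry_le (M : vec) i : `|M 0 i| <= `|M|.
Proof.
rewrite [leRHS]/Num.Def.normr /= mx_normrE; apply/bigmax_geP; right => /=.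
by exists (0, i).
Qed.

Lemma norm_lt (M : vec) e : 0 < e -> (forall i, `|M 0 i| < e) -> `|M| < e.
Proof.
move=> e0 H; rewrite [ltLHS]/Num.Def.normr /= mx_normrE; apply: bigmax_lt => // -[a b] _ /=.
by rewrite (ord1 a); exact: H.
Qed.

Lemma ejE (j i : 'I_p) : @ej R p j 0 i = (i == j)%:R.
Proof. by rewrite /ej mxE eqxx. Qed.

Lemma prox_fix (gam : R) (h : R -> \bar R) v y x0 :
  0 < gam -> is_prox gam h v y -> subdiff1 h x0 ((v - x0) / gam) -> y = x0.
Proof.
move=> g0 Hp [hf Hs].
have H1 := Hp x0; have H2 := Hs y.
move: H1 H2; rewrite -(fineK hf).
case: (h y) => [b| |] //=.
rewrite -!EFinD !lee_fin => H1 H2.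
set a := fine (h x0) in H1 H2.
have E : (v - y) ^+ 2 / (2 * gam) + (v - x0) / gam * (y - x0) - (v - x0) ^+ 2 / (2 * gam)
   = (y - x0) ^+ 2 / (2 * gam).
  by field; rewrite gt_eqF.
have H3 : (y - x0) ^+ 2 / (2 * gam) <= 0 by rewrite -E; lra.
have H4 : 0 <= (y - x0) ^+ 2 / (2 * gam) by rewrite divr_ge0 // ?sqr_ge0 // mulr_ge0 // ltW.
have : (y - x0) ^+ 2 / (2 * gam) = 0 by apply/eqP; rewrite eq_le H3 H4.
move/eqP; rewrite mulf_eq0 invr_eq0.
case/orP; first by rewrite sqrf_eq0 subr_eq0 => /eqP.
by rewrite mulf_eq0 (gt_eqF g0) orbF pnatr_eq0.
Qed.


Lemma subdiff_coord (g : 'I_p -> R -> \bar R) (xm u : vec) :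
  subdiff (sep_sum g) xm u -> forall i, subdiff1 (g i) (xm 0 i) (u 0 i).
Proof.
move=> [hf H] i.
have fi : forall l, g l (xm 0 l) \is a fin_num.
  by move: hf; rewrite /sep_sum => /sum_fin_numP H' l; exact: H'.
split; first exact: fi.
move=> y0.
have [y Hy] : exists y : vec, forall l, y 0 l = if l == i then y0 else xm 0 l.
  by exists (\row_l if l == i then y0 else xm 0 l) => l; rewrite mxE.
have := H y.
have Hd : dotp u (y - xm) = u 0 i * (y0 - xm 0 i).
  rewrite /dotp (bigD1 i) //= big1 => [|l /negbTE li]; rewrite !mxE Hy ?li ?eqxx.
    by rewrite addr0.
  by rewrite subrr mulr0.
have ES : (\sum_(l < p | l != i) g l (y 0%R l) = \sum_(l < p | l != i) g l (xm 0%R l))%E.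
  by apply: eq_bigr => l /negbTE li; rewrite Hy li.
have fS : (\sum_(l < p | l != i) g l (xm 0%R l))%E \is a fin_num.
  by apply/sum_fin_numP => l _ _; exact: fi.
rewrite /sep_sum (bigD1 i) //= (bigD1 i (P := xpredT)) //= Hy eqxx ES Hd.
rewrite -(fineK fS) -(fineK (fi i)).
case: (g i y0) => [b||] /=.
- by rewrite -!EFinD !lee_fin; lra.
- by move=> _; exact: leey.
- by rewrite -!EFinD addNye leeNy_eq.
Qed.

Lemma subdiff_of_coord (g : 'I_p -> R -> \bar R) (xm u : vec) :
  (forall i, subdiff1 (g i) (xm 0 i) (u 0 i)) -> subdiff (sep_sum g) xm u.
Proof.
move=> H; split.
  by rewrite /sep_sum; apply/sum_fin_numP => l _ _; case: (H l).
move=> y; rewrite /sep_sum /dotp -sumEFin -big_split /=; apply: lee_sum => l _.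
rewrite !mxE; case: (H l) => _ Hl; exact: Hl.
Qed.


Lemma relint_interval (g : 'I_p -> R -> \bar R) (xm w : vec) (j : 'I_p) :
  rel_interior (subdiff (sep_sum g) xm) w -> ~ gen_support g xm j ->
  exists2 eps : R, 0 < eps &
    forall r, `|r - w 0 j| < eps -> subdiff1 (g j) (xm 0 j) r.
Proof.
move=> [Cw [eps e0 Hb]] ns; exists eps => // r hr.
have Hw := @subdiff_coord g xm w Cw.
have [s [Ss sne]] : exists s, subdiff1 (g j) (xm 0 j) s /\ s != w 0 j.
  apply: contrapT => Hn; apply: ns; exists (w 0 j).
  apply/seteqP; split => [s Ss|s ->]; last exact: Hw.
  by apply/eqP/negPn/negP => hne; apply: Hn; exists s.
pose t := (r - w 0 j) / (s - w 0 j).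
pose w' : vec := \row_l (if l == j then s else w 0 l).
have Cw' : subdiff (sep_sum g) xm w'.
  apply: subdiff_of_coord => l; rewrite mxE; case: eqP => [->|_]; [exact: Ss|exact: Hw].
pose y : vec := \row_l (if l == j then r else w 0 l).
suff Cy : subdiff (sep_sum g) xm y by have := @subdiff_coord g xm y Cy j; rewrite mxE eqxx.
apply: Hb.
  rewrite -ball_normE /ball_ /=; apply: norm_lt => // i; rewrite !mxE.
  by case: eqP => [->|_]; [rewrite distrC|rewrite subrr normr0].
exists 2%N, (fun i : 'I_2 => if i == ord0 then w else w'),
  (fun i : 'I_2 => if i == ord0 then 1 - t else t).
split; first by move=> i; case: ifP => _; [exact: Cw|exact: Cw'].
split; first by rewrite big_ord_recr big_ord1 /= subrK.
apply/rowP => l; rewrite big_ord_recr big_ord1 /= !mxE.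
have sw : s - w 0 j != 0 by rewrite subr_eq0.
case: eqP => [->|_]; last by ring.
rewrite /t; field; exact: sw.
Qed.


Lemma zcoord (f : vec -> R) (g : 'I_p -> R -> \bar R) gam x z :
  cyclic_prox_cd f g gam x z ->
  forall k m (i : 'I_p), (m <= p)%N ->
    z k m 0 i = if (i < m)%N then x k.+1 0 i else x k 0 i.
Proof.
move=> H k.
have A : forall m (i : 'I_p), (m <= p)%N -> (m <= i)%N -> z k m 0 i = x k 0 i.
  elim=> [|m IH] i mp mi; first by case: (H k) => -> _.
  have mp' : (m < p)%N by [].
  case: (H k) => _ [Hj _]; have [Hn _] := Hj (Ordinal mp').
  rewrite Hn; first by apply: IH; lia.
  by apply/eqP => /(congr1 val) /=; lia.
have B : forall (i : 'I_p) m, (i < m)%N -> (m <= p)%N -> z k m 0 i = z k i.+1 0 i.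
  move=> i; elim=> [|m IH] // im mp.
  have mp' : (m < p)%N by [].
  case: (H k) => _ [Hj _]; have [Hn _] := Hj (Ordinal mp').
  case: (ltngtP i m) => [lt|gt|eq].
  - rewrite Hn; first by apply: IH => //; lia.
    by apply/eqP => /(congr1 val) /=; lia.
  - lia.
  - by rewrite -eq.
move=> m i mp; case: ifP => im.
  rewrite B //; case: (H k) => _ [_ ->]; rewrite B //.
by rewrite A //; lia.
Qed.

End Aux.
Arguments entry_le {R p}.
Arguments norm_lt {R p}.
Arguments prox_fix {R gam h v y x0}.
Arguments zcoord {R p f g gam x z}.


Theorem theorem1 (R : realType) (p : nat)
  (f : 'rV[R]_p -> R) (g : 'I_p -> R -> \bar R)
  (L : 'I_p -> R) (gam : 'I_p -> R)
  (x : nat -> 'rV[R]_p) (z : nat -> nat -> 'rV[R]_p) (xstar : 'rV[R]_p) :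
  convex_fun f ->
  differentiable_everywhere f ->
  lipschitz_gradient f ->
  (forall j, proper_ext (g j) /\ closed_ext (g j) /\ convex_ext (g j)) ->
  (exists xm, is_minimizer (Phi f g) xm) ->
  (forall xm, is_minimizer (Phi f g) xm ->
     rel_interior (subdiff (sep_sum g) xm) (- grad f xm)) ->
  is_minimizer (Phi f g) xstar ->
  (forall j, gen_support g xstar j -> C2_near1 (g j) (xstar 0 j)) ->
  C2_near f xstar ->
  (forall j, 0 <= L j /\ coord_lipschitz f j (L j)) ->
  (forall j, 0 < gam j /\ gam j * L j <= 1) ->
  cyclic_prox_cd f g gam x z ->
  x @ \oo --> xstar ->
  exists2 K : nat, (0 < K)%N &
    forall k : nat, (K <= k)%N ->
      forall j : 'I_p, ~ gen_support g xstar j -> x k 0 j = xstar 0 j.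
Proof.
move=> _ _ [Lg HLg] Hg _ Hnd Hmin _ _ _ Hgam Hcd Hcv.
have Hri := Hnd xstar Hmin.
have Hz := zcoord Hcd.
have key : forall j : 'I_p, exists N : nat, (0 < N)%N /\
    (~ gen_support g xstar j -> forall k, (N <= k)%N -> x k 0 j = xstar 0 j).
  move=> j; case: (pselect (gen_support g xstar j)) => [gs|ns].
    by exists 1%N; split => // /(_ gs).
  have [eps e0 Heps] := @relint_interval R p g xstar (- grad f xstar) j Hri ns.
  have [g0 _] := Hgam j.
  pose d := Num.min (eps * gam j / 2) (eps / (2 * (`|Lg| + 1))).
  have d0 : 0 < d.
    rewrite /d lt_min; apply/andP; split.
      by apply: divr_gt0 => //; apply: mulr_gt0.
    by apply: divr_gt0 => //; apply: mulr_gt0 => //; apply: ltr_pwDr.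
  have [N HN] : exists N, forall k, (N <= k)%N -> `|xstar - x k| < d.
    have := (cvgrPdist_lt _ _).1 Hcv d d0.
    by case=> N _ HN; exists N => k kN; exact: HN.
  exists N.+1; split => // _ k kN.
  case: k kN => [//|k] kN.
  have zj : forall i, `|z k j 0 i - xstar 0 i| < d.
    move=> i; rewrite Hz; last exact: ltnW (ltn_ord j).
    rewrite distrC.
    case: ifP => _.
      have := entry_le (xstar - x k.+1) i; rewrite !mxE => /le_lt_trans; apply.
      by apply: HN; lia.
    have := entry_le (xstar - x k) i; rewrite !mxE => /le_lt_trans; apply.
    by apply: HN; lia.
  have zn : `|z k j - xstar| < d.
    by apply: norm_lt => // i; rewrite !mxE; exact: zj.
  have Hpd : `|partial f j (z k j) - partial f j xstar| <= Lg * `|z k j - xstar|.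
    have := entry_le (grad f (z k j) - grad f xstar) j; rewrite !mxE => /le_trans.
    by apply; exact: HLg.
  have Hs : subdiff1 (g j) (xstar 0 j)
      ((z k j 0 j - gam j * partial f j (z k j) - xstar 0 j) / gam j).
    apply: Heps; rewrite !mxE.
    have E : (z k j 0 j - gam j * partial f j (z k j) - xstar 0 j) / gam j
               - - partial f j xstar
             = (z k j 0 j - xstar 0 j) / gam j
               - (partial f j (z k j) - partial f j xstar).
      by field; rewrite gt_eqF.
    rewrite E; apply: le_lt_trans (ler_normB _ _) _.
    have dm1 : d <= eps * gam j / 2 by rewrite /d ge_min lexx.
    have dm2 : d <= eps / (2 * (`|Lg| + 1)) by rewrite /d ge_min lexx orbT.
    have h1 : `|(z k j 0 j - xstar 0 j) / gam j| < eps / 2.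
      rewrite normrM normfV (gtr0_norm g0) ltr_pdivrMr //.
      have := zj j; lra.
    have h2 : `|partial f j (z k j) - partial f j xstar| < eps / 2.
      set n := `|z k j - xstar| in zn Hpd.
      have n0 : 0 <= n by rewrite normr_ge0.
      have Lp : 0 < 2 * (`|Lg| + 1) by apply: mulr_gt0 => //; apply: ltr_pwDr.
      have hn : n * (2 * (`|Lg| + 1)) < eps.
        by rewrite -ltr_pdivlMr //; apply: lt_le_trans zn dm2.
      have hL : Lg * n <= `|Lg| * n by apply: ler_wpM2r => //; exact: ler_norm.
      have hLg : 0 <= `|Lg| by rewrite normr_ge0.
      have E2 : n * (2 * (`|Lg| + 1)) = 2 * (`|Lg| * n) + 2 * n by ring.
      lra.
    lra.
  have [_ [Hj _]] := Hcd k.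
  have [_ Hp] := Hj j.
  have := prox_fix g0 Hp Hs.
  have := Hz k j.+1 j (ltn_ord j); rewrite ltnSn => <-.
  done.
have [N HN] := choice key.
exists (\max_(j < p) N j).+1 => // k kK j ns.
have [_ H] := HN j; apply: (H ns k).
exact: leq_trans (@leq_bigmax 'I_p N j) (ltnW kK).
Qed.
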